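(* Let $G$ be a fermionic group with $(-1)^F\neq 1$, and let $d\ge1$. Then there is an exact sequence of topological groups \[ 1\to\operatorname{Spin}(d)\to H_d(G)\to G_b\to 1, \] where $G_b:=G/\langle(-1)^F\rangle$.
   Context: A fermionic group is a topological group $G$ together with a central element $(-1)^F$ with $((-1)^F)^2=1$ and a continuous homomorphism $\theta:G\to\mathbb{Z}_2$ with $\theta((-1)^F)=0$. The fermionic tensor product $A\otimes B$ of fermionic groups is the quotient $(A\times B)/\langle((-1)^F_A,(-1)^F_B)\rangle$, with product $(a_1\otimes b_1)(a_2\otimes b_2)=((-1)^F_A)^{\theta(a_2)\theta(b_1)}a_1a_2\otimes b_1b_2$ and grading $\theta(a\otimes b)=\theta(a)+\theta(b)$. The subscript $ev$ denotes the kernel of the grading. $\operatorname{Pin}^+(d)$ is the double cover of $O(d)$ in which lifts of reflections square to $+1$. It is graded by the determinant sign of its image in $O(d)$, so that its even part is $\operatorname{Spin}(d)$, and its fermion parity is $-1$. Finally, $H_d(G):=(\operatorname{Pin}^+(d)\otimes G)_{ev}$. *)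

(* Defs.v *)
From HB Require Import structures.
From mathcomp Require Import all_boot all_order all_algebra generic_quotient.
From mathcomp Require Import all_classical all_reals topology_structure
  product_topology function_spaces subtype_topology quotient_topology
  bool_topology num_topology.
From mathcomp Require Import Rstruct Rstruct_topology.

Set Implicit Arguments.
Unset Strict Implicit.
Unset Printing Implicit Defensive.

Import GRing.Theory.
Local Open Scope classical_set_scope.
Local Open Scope ring_scope.
Local Open Scope quotient_scope.

Record topGroup := TopGroup {
  tg_sort :> topologicalType;
  tg_mul : tg_sort -> tg_sort -> tg_sort;
  tg_one : tg_sort;
  tg_inv : tg_sort -> tg_sort;
  tg_mulA : associative tg_mul;
  tg_mul1g : left_id tg_one tg_mul;
  tg_mulVg : left_inverse tg_one tg_inv tg_mul;
  tg_mul_cont : continuous (fun p : tg_sort * tg_sort => tg_mul p.1 p.2);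
  tg_inv_cont : continuous tg_inv }.

(* A fermionic group: a topological group G with a central element
   fparity = (-1)^F of square 1 and a continuous homomorphism
   ftheta : G -> Z/2 (Z/2 = bool with xor, discrete topology) with
   ftheta fparity = 0. *)
Record fermionicGroup := FermionicGroup {
  fg_group :> topGroup;
  fparity : fg_group;
  ftheta : fg_group -> bool;
  fparity_central : forall g, tg_mul fparity g = tg_mul g fparity;
  fparity_sq : tg_mul fparity fparity = tg_one fg_group;
  ftheta_mul : forall x y, ftheta (tg_mul x y) = ftheta x (+) ftheta y;
  ftheta_cont : continuous ftheta;
  ftheta_parity : ftheta fparity = false }.

Notation RR := Rdefinitions.R.

(* An element of Cl(d) is its coordinate function on the basis
   e_A = e_{a_1} ... e_{a_k}  (A = {a_1 < ... < a_k}); Cl(d) = R^(2^d)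
   carries its (Euclidean = product) topology. *)
Definition Cl (d : nat) : topologicalType := {ptws {set 'I_d} -> RR}.

Section Clifford.
Variable d : nat.

Definition symd (A B : {set 'I_d}) : {set 'I_d} := (A :\: B) :|: (B :\: A).

(* e_A e_B = csign A B e_(A symdiff B), for the signature e_i^2 = +1 *)
Definition csign (A B : {set 'I_d}) : RR :=
  (-1) ^+ #|finset.finset (fun p : 'I_d * 'I_d =>
                          [&& p.1 \in A, p.2 \in B & (p.2 < p.1)%N])|.

Definition clmul (x y : Cl d) : Cl d :=
  fun C => \sum_(A : {set 'I_d}) csign A (symd A C) * x A * y (symd A C).

Definition clone : Cl d := fun A => if A == finset.set0 then 1 else 0.
Definition clm1 : Cl d := fun A => if A == finset.set0 then -1 else 0.

Definition clvec (v : 'I_d -> RR) : Cl d :=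
  fun A => \sum_(i : 'I_d | A == finset.set1 i) v i.

Definition unit_vector (v : 'I_d -> RR) : Prop := \sum_(i : 'I_d) v i ^+ 2 = 1.

(* Pin+(d): the subgroup of Cl(d)^x generated by -1 and the unit vectors
   (the latter are their own inverses, so this is the submonoid they
   generate). *)
Definition pin_set : set (Cl d) := fun x =>
  forall S : set (Cl d),
    S clone -> S clm1 -> (forall v, unit_vector v -> S (clvec v)) ->
    (forall a b, S a -> S b -> S (clmul a b)) -> S x.

Lemma pin_set_mul a b : pin_set a -> pin_set b -> pin_set (clmul a b).
Proof.
move=> pa pb S h1 hm1 hv hm.
exact: hm (pa S h1 hm1 hv hm) (pb S h1 hm1 hv hm).
Qed.

Lemma pin_set_one : pin_set clone.
Proof. by move=> S h1. Qed.

Lemma pin_set_m1 : pin_set clm1.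
Proof. by move=> S h1 hm1. Qed.

Definition Pin : topologicalType := set_type pin_set.

Definition pin_mul (a b : Pin) : Pin :=
  exist _ (clmul (val a) (val b))
    (mem_set (pin_set_mul (set_mem (valP a)) (set_mem (valP b)))).
Definition pin_one : Pin := exist _ clone (mem_set pin_set_one).
Definition pin_m1 : Pin := exist _ clm1 (mem_set pin_set_m1).

(* The Z/2-grading of Cl(d) (odd part); on Pin+(d) it is the determinant
   sign of the image in O(d): a product of k unit vectors has parity k. *)
Definition cl_odd (x : Cl d) : bool :=
  [exists A : {set 'I_d}, odd #|A| && (x A != 0)].
Definition pin_theta (a : Pin) : bool := cl_odd (val a).

Definition Spin : topologicalType := set_type [set a : Pin | ~~ pin_theta a].

End Clifford.

Section Fermionic.
Variables (G : fermionicGroup) (d : nat).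

Definition PG := (Pin d * tg_sort G)%type.

Definition fflip (x : PG) : PG :=
  (pin_mul (pin_m1 d) x.1, tg_mul (fparity G) x.2).

(* x ~ y iff x and y have the same coset modulo the subgroup
   < ((-1)^F, (-1)^F) > = {1, ((-1)^F,(-1)^F)} *)
Definition fcoset (x : PG) : set PG := [set x; fflip x].
Definition frel : rel PG := fun x y => `[< fcoset x = fcoset y >].

Lemma frel_refl : reflexive frel.
Proof. by move=> x; apply/asboolP. Qed.
Lemma frel_sym : symmetric frel.
Proof.
by move=> x y; apply: asbool_equiv_eq; split=> h; rewrite h.
Qed.
Lemma frel_trans : transitive frel.
Proof. by move=> y x z /asboolP h1 /asboolP h2; apply/asboolP; rewrite h1 h2. Qed.

Definition frel_equiv := EquivRel frel frel_refl frel_sym frel_trans.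

Definition Tens : topologicalType :=
  quotient_topology {eq_quot frel_equiv}.

Definition tens_pi (x : PG) : Tens := \pi_Tens x.

(* (a1 (x) g1)(a2 (x) g2) = ((-1)^F)^(theta a2 theta g1) a1 a2 (x) g1 g2 *)
Definition tens_twist (x y : PG) : PG :=
  (let s := pin_mul x.1 y.1 in
   if pin_theta y.1 && ftheta x.2 then pin_mul (pin_m1 d) s else s,
   tg_mul x.2 y.2).

Definition tens_mul (x y : Tens) : Tens :=
  tens_pi (tens_twist (repr x) (repr y)).

Definition tens_theta (x : Tens) : bool :=
  pin_theta (repr x).1 (+) ftheta (repr x).2.

Definition Hd : topologicalType := set_type [set x : Tens | ~~ tens_theta x].

Definition bcoset (g : tg_sort G) : set (tg_sort G) := [set g; tg_mul (fparity G) g].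
Definition brel : rel (tg_sort G) := fun x y => `[< bcoset x = bcoset y >].

Lemma brel_refl : reflexive brel.
Proof. by move=> x; apply/asboolP. Qed.
Lemma brel_sym : symmetric brel.
Proof. by move=> x y; apply: asbool_equiv_eq; split=> h; rewrite h. Qed.
Lemma brel_trans : transitive brel.
Proof. by move=> y x z /asboolP h1 /asboolP h2; apply/asboolP; rewrite h1 h2. Qed.

Definition brel_equiv := EquivRel brel brel_refl brel_sym brel_trans.

Definition Gb : topologicalType := quotient_topology {eq_quot brel_equiv}.

Definition gb_pi (g : tg_sort G) : Gb := \pi_Gb g.
Definition gb_mul (x y : Gb) : Gb := gb_pi (tg_mul (repr x) (repr y)).
Definition gb_one : Gb := gb_pi (tg_one G).

End Fermionic.

(* Main.v *)
Require Import Defs.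
From HB Require Import structures.
From mathcomp Require Import all_boot all_order all_algebra generic_quotient.
From mathcomp Require Import all_classical all_reals topology_structure
  product_topology function_spaces subtype_topology quotient_topology
  bool_topology num_topology.
From mathcomp Require Import Rstruct Rstruct_topology initial_topology.
Set Implicit Arguments.
Unset Strict Implicit.
Unset Printing Implicit Defensive.
Import GRing.Theory.
Local Open Scope classical_set_scope.
Local Open Scope ring_scope.
Local Open Scope quotient_scope.

Section Grp.
Variable G : topGroup.
Local Notation "x * y" := (tg_mul x y).
Lemma tg_mulgV (x : G) : x * tg_inv x = tg_one G.
Proof.
have e1 : x * tg_inv x = (tg_inv (tg_inv x) * tg_inv x) * (x * tg_inv x).
  by rewrite tg_mulVg tg_mul1g.
rewrite e1 tg_mulA -(tg_mulA _ (tg_inv x) x) tg_mulVg -(tg_mulA _ (tg_one G)).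
by rewrite tg_mul1g tg_mulVg.
Qed.
Lemma tg_mulg1 (x : G) : x * tg_one G = x.
Proof. by rewrite -(tg_mulVg x) tg_mulA tg_mulgV tg_mul1g. Qed.
End Grp.

Section Cl.
Variable d : nat.
Lemma clmul_m1l (x : Cl d) : clmul (@clm1 d) x = (fun C => - x C).
Proof.
apply/funext => C; rewrite /clmul (bigD1 finset.set0) //= big1 => [|A hA]; last first.
  by rewrite /clm1 (negbTE hA) mulr0 mul0r.
rewrite /clm1 eqxx addr0.
have -> : symd finset.set0 C = C by rewrite /symd finset.set0D finset.setD0 finset.set0U.
have -> : csign finset.set0 C = 1.
  rewrite /csign (_ : finset.finset _ = finset.set0) ?cards0 ?expr0 //.
  apply/finset.setP => p; rewrite finset.in_set finset.in_set0.
  by rewrite finset.inE.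
by rewrite GRing.mul1r GRing.mulN1r.
Qed.
Lemma clmul_Nr (x y : Cl d) : clmul x (fun C => - y C) = (fun C => - clmul x y C).
Proof. by apply/funext => C; rewrite /clmul -sumrN; apply: eq_bigr => A _; rewrite mulrN. Qed.
Lemma clmul_Nl (x y : Cl d) : clmul (fun C => - x C) y = (fun C => - clmul x y C).
Proof. by apply/funext => C; rewrite /clmul -sumrN; apply: eq_bigr => A _; rewrite mulrN mulNr. Qed.
Lemma cl_oddN (x : Cl d) : cl_odd (fun C => - x C) = cl_odd x.
Proof. by rewrite /cl_odd; apply: eq_existsb => A; rewrite oppr_eq0. Qed.

Lemma pin_m1E (a : Pin d) : val (pin_mul (pin_m1 d) a) = (fun C => - val a C).
Proof. exact: clmul_m1l. Qed.
Lemma pin_m1K (a : Pin d) : pin_mul (pin_m1 d) (pin_mul (pin_m1 d) a) = a.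
Proof. apply: val_inj => /=; rewrite !clmul_m1l; apply/funext => C; exact: opprK. Qed.
Lemma pin_theta_m1 (a : Pin d) : pin_theta (pin_mul (pin_m1 d) a) = pin_theta a.
Proof. by rewrite /pin_theta /= clmul_m1l cl_oddN. Qed.
Lemma pin_mul_m1l (a b : Pin d) : pin_mul (pin_mul (pin_m1 d) a) b = pin_mul (pin_m1 d) (pin_mul a b).
Proof. apply: val_inj => /=; rewrite !clmul_m1l; exact: clmul_Nl. Qed.
Lemma pin_mul_m1r (a b : Pin d) : pin_mul a (pin_mul (pin_m1 d) b) = pin_mul (pin_m1 d) (pin_mul a b).
Proof. apply: val_inj => /=; rewrite !clmul_m1l; exact: clmul_Nr. Qed.
End Cl.


Section Ferm.
Variables (G : fermionicGroup) (d : nat).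
Local Notation "x * y" := (tg_mul x y).
Local Notation par := (fparity G).
Local Notation one := (tg_one G).

Lemma parK (g : G) : par * (par * g) = g.
Proof. by rewrite tg_mulA fparity_sq tg_mul1g. Qed.
Lemma ftheta1 : ftheta (one : G) = false.
Proof. by have := ftheta_mul (one : G) one; rewrite tg_mul1g addbb. Qed.

Lemma tens_piP (x y : PG G d) : tens_pi x = tens_pi y -> Defs.frel x y.
Proof. by move=> h; apply/(@eqmodP _ (frel_equiv G d)); exact: h. Qed.
Lemma tens_piE (x y : PG G d) : Defs.frel x y -> tens_pi x = tens_pi y.
Proof. by move=> h; apply/(@eqmodP _ (frel_equiv G d)). Qed.
Lemma gb_piP (x y : G) : gb_pi x = gb_pi y -> brel x y.
Proof. by move=> h; apply/(@eqmodP _ (brel_equiv G)); exact: h. Qed.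
Lemma gb_piE (x y : G) : brel x y -> gb_pi x = gb_pi y.
Proof. by move=> h; apply/(@eqmodP _ (brel_equiv G)). Qed.

Lemma fflipK (x : PG G d) : fflip (fflip x) = x.
Proof. by case: x => a g; rewrite /fflip /= pin_m1K parK. Qed.
Lemma tens_pi_flip (x : PG G d) : tens_pi (fflip x) = tens_pi x.
Proof.
apply: tens_piE; apply/asboolP; rewrite /fcoset fflipK.
by apply/seteqP; split => z /= [] ->; by [left|right].
Qed.
Lemma gb_pi_par (g : G) : gb_pi (par * g) = gb_pi g.
Proof.
apply: gb_piE; apply/asboolP; rewrite /bcoset parK.
by apply/seteqP; split => z /= [] ->; by [left|right].
Qed.
Lemma repr_tens (x : PG G d) : repr (tens_pi x) = x \/ repr (tens_pi x) = fflip x.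
Proof.
have /tens_piP/asboolP h : tens_pi (repr (tens_pi x)) = tens_pi x by exact: reprK.
have : fcoset x (repr (tens_pi x)) by rewrite -h /fcoset /=; left.
by [].
Qed.
Lemma repr_gb (g : G) : repr (gb_pi g) = g \/ repr (gb_pi g) = par * g.
Proof.
have /gb_piP/asboolP h : gb_pi (repr (gb_pi g)) = gb_pi g by exact: reprK.
have : bcoset g (repr (gb_pi g)) by rewrite -h /bcoset /=; left.
by [].
Qed.
End Ferm.

Section Main.
Variables (G : fermionicGroup) (d : nat).
Local Notation "x * y" := (tg_mul x y).
Local Notation par := (fparity G).
Local Notation one := (tg_one G).

Lemma i_ok' (a : Pin d) : ~~ pin_theta a -> ~~ tens_theta (tens_pi (a, (one : G))).
Proof.
move=> hs; rewrite /tens_theta; case: (repr_tens (a, (one : G))) => -> /=;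
  rewrite ?pin_theta_m1 ?ftheta_mul ?ftheta_parity ftheta1 //; by move: hs; case: (pin_theta a).
Qed.
Lemma i_ok (s : Spin d) : ~~ tens_theta (tens_pi ((val s : Pin d), (one : G))).
Proof. apply: i_ok'; exact: (set_mem (valP s)). Qed.

Definition ii (s : Spin d) : Hd G d := exist _ (tens_pi ((val s : Pin d), (one : G))) (mem_set (i_ok s)).
Definition pp (h : Hd G d) : Gb G := gb_pi (repr (val h)).2.

Lemma ii_cont : continuous ii.
Proof.
apply: (@continuous_comp_initial (set_type [set x : Tens G d | ~~ tens_theta x]) (Spin d) (Tens G d) set_val ii) => s.
apply: (@continuous_comp _ _ _ (fun s : Spin d => ((val s : Pin d), (one : G)))).
  apply: (@cvg_pair _ _ _ (nbhs s) (nbhs (val s : Pin d)) (nbhs (one : G)) _ _ _ (fun s : Spin d => (val s : Pin d)) (fun _ => (one : G))); last exact: cvg_cst.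
  exact: (@initial_continuous _ _ (@set_val _ _)).
exact: pi_continuous.
Qed.

Lemma pp_cont : continuous pp.
Proof.
move=> h0; apply: (@continuous_comp _ _ _ (@set_val _ _) (fun t : Tens G d => gb_pi (repr t).2)).
  exact: (@initial_continuous _ _ (@set_val _ _)).
apply: (@repr_comp_continuous _ _ _ (fun x : PG G d => gb_pi x.2)).
  move=> x; apply: (@continuous_comp _ _ _ snd); first exact: cvg_snd.
  exact: pi_continuous.
move=> a b /eqP hab; apply/eqP.
have /asboolP h : Defs.frel a b by apply: tens_piP; exact: hab.
have : fcoset a b by rewrite h; left.
by case=> ->; rewrite //= gb_pi_par.
Qed.

Lemma pp_val (h : Hd G d) w : val h = tens_pi w -> pp h = gb_pi w.2.
Proof. by rewrite /pp => ->; case: (repr_tens w) => ->; rewrite //= gb_pi_par. Qed.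

Lemma gb_mul_pi (a b : G) : gb_mul (gb_pi a) (gb_pi b) = gb_pi (a * b).
Proof.
rewrite /gb_mul; case: (repr_gb a) => ->; case: (repr_gb b) => ->.
- by [].
- by rewrite tg_mulA -fparity_central -tg_mulA gb_pi_par.
- by rewrite -tg_mulA gb_pi_par.
by rewrite -tg_mulA (tg_mulA a) -fparity_central -tg_mulA parK.
Qed.

Lemma ftheta_par1 : ftheta (par * (one : G)) = false.
Proof. by rewrite ftheta_mul ftheta_parity ftheta1. Qed.

Lemma ii_hom (s t u : Spin d) : val u = pin_mul (val s) (val t) ->
  val (ii u) = tens_mul (val (ii s)) (val (ii t)).
Proof.
move=> hu; have hu' : sval u = pin_mul (sval s) (sval t) := hu.
rewrite /tens_mul /=.
case: (repr_tens ((val s : Pin d), (one : G))) => ->;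
case: (repr_tens ((val t : Pin d), (one : G))) => ->;
rewrite /tens_twist /= ?ftheta1 ?ftheta_par1 ?andbF.
- by rewrite hu' tg_mul1g.
- by rewrite hu' pin_mul_m1r tg_mul1g -tens_pi_flip.
- by rewrite hu' pin_mul_m1l -tens_pi_flip /fflip /= !tg_mulg1.
by rewrite hu' pin_mul_m1l pin_mul_m1r pin_m1K !tg_mulg1 fparity_sq.
Qed.

Lemma pp_hom (x y z : Hd G d) : val z = tens_mul (val x) (val y) ->
  pp z = gb_mul (pp x) (pp y).
Proof.
move=> hz; rewrite (pp_val (w := tens_twist (repr (val x)) (repr (val y))) hz).
by rewrite /pp gb_mul_pi.
Qed.

Lemma ii_inj : par <> one -> injective ii.
Proof.
move=> hpar s t /(congr1 val) /= /tens_piP /asboolP h.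
have : fcoset ((val s : Pin d), (one : G)) ((val t : Pin d), (one : G)) by rewrite h; left.
case=> [[e]|[_ e]]; first by apply: val_inj.
by exfalso; apply: hpar; rewrite e tg_mulg1.
Qed.

Lemma tens_theta_pi (w : PG G d) : tens_theta (tens_pi w) = pin_theta w.1 (+) ftheta w.2.
Proof.
rewrite /tens_theta; case: (repr_tens w) => -> //=.
by rewrite pin_theta_m1 ftheta_mul ftheta_parity.
Qed.

Lemma exists_odd : (1 <= d)%N -> exists e : Pin d, pin_theta e.
Proof.
move=> hd; pose i0 : 'I_d := Ordinal hd.
pose v := fun i : 'I_d => ((i == i0)%:R : RR).
have hv : unit_vector v.
  rewrite /unit_vector (bigD1 i0) //= big1 ?addr0 => [|i ne].
    by rewrite /v eqxx expr1n.
  by rewrite /v (negbTE ne) expr0n.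
have hp : clvec v \in @pin_set d by apply: mem_set => S h1 hm1 hvv hm; exact: hvv.
exists (exist _ (clvec v) hp); rewrite /pin_theta /cl_odd /=.
apply/existsP; exists (finset.set1 i0); rewrite finset.cards1 /=.
rewrite /clvec (bigD1 i0) ?eqxx //= big1 ?addr0 => [|i /andP [_ ne]].
  by rewrite /v eqxx oner_neq0.
by rewrite /v (negbTE ne).
Qed.

Lemma pin_theta_one : pin_theta (pin_one d) = false.
Proof.
rewrite /pin_theta /cl_odd /=; apply/existsP => -[A /andP [hA]].
rewrite /clone; case: (A =P finset.set0) => [e|ne].
  by move: hA; rewrite e finset.cards0.
by move/eqP.
Qed.

Lemma pp_surj : (1 <= d)%N -> forall b : Gb G, exists h : Hd G d, pp h = b.
Proof.
move=> hd b; have hb : gb_pi (repr b) = b by exact: reprK.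
have [e he] := exists_odd hd.
case hg: (ftheta (repr b)).
  have H : ~~ tens_theta (tens_pi (e, repr b)) by rewrite tens_theta_pi /= he hg.
  exists (exist _ (tens_pi (e, repr b)) (mem_set H)).
  by rewrite (pp_val (w := (e, repr b))).
have H : ~~ tens_theta (tens_pi (pin_one d, repr b)) by rewrite tens_theta_pi /= pin_theta_one hg.
exists (exist _ (tens_pi (pin_one d, repr b)) (mem_set H)).
by rewrite (pp_val (w := (pin_one d, repr b))).
Qed.

Lemma exact_mid (h : Hd G d) : pp h = gb_one G <-> exists s : Spin d, ii s = h.
Proof.
split; last first.
  by case=> s <-; rewrite (pp_val (w := ((val s : Pin d), (one : G)))).
have hv : val h = tens_pi (repr (val h)) by exact/esym/reprK.
have ht : ~~ tens_theta (val h) by have := set_mem (valP h).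
rewrite /pp; move: hv ht; case: (repr (val h)) => a g /= hv ht hh.
rewrite hv tens_theta_pi /= in ht.
have /gb_piP/asboolP e := hh.
have : bcoset (one : G) g by rewrite -e; left.
case=> hg0; have hg : g = _ := hg0.
  have H : ~~ pin_theta a by move: ht; rewrite hg ftheta1 addbF.
  by exists (exist _ a (mem_set H)); apply: val_inj; rewrite /= hv hg.
have H : ~~ pin_theta (pin_mul (pin_m1 d) a).
  by move: ht; rewrite pin_theta_m1 hg ftheta_par1 addbF.
exists (exist _ (pin_mul (pin_m1 d) a) (mem_set H)); apply: val_inj; rewrite /= hv hg.
by rewrite -tens_pi_flip /fflip /= pin_m1K.
Qed.
End Main.


Theorem mainTheorem5 (G : fermionicGroup) (d : nat) :
  fparity G <> tg_one G -> (1 <= d)%N ->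
  exists (i : Spin d -> Hd G d) (p : Hd G d -> Gb G),
    [/\ continuous i, continuous p,
        (* i is a group homomorphism *)
        (forall s t u : Spin d, val u = pin_mul (val s) (val t) ->
            val (i u) = tens_mul (val (i s)) (val (i t))) &
        (* p is a group homomorphism *)
        (forall x y z : Hd G d, val z = tens_mul (val x) (val y) ->
            p z = gb_mul (p x) (p y))] /\
    [/\ (* exactness of 1 -> Spin(d) -> H_d(G) -> G_b -> 1 *)
        injective i,
        (forall b : Gb G, exists h : Hd G d, p h = b) &
        (forall h : Hd G d, p h = gb_one G <-> exists s : Spin d, i s = h)].
Proof.
move=> hpar hd.
exists (@ii G d), (@pp G d); split; split.
- exact: ii_cont.
- exact: pp_cont.
- exact: ii_hom.
- exact: pp_hom.
- exact: ii_inj.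
- exact: pp_surj.
- exact: exact_mid.
Qed.
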